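(* Consider a splitting method in which, at every time $t$, the splitting step is carried out by a conditionally independent resampling scheme (as defined in the context). If, with probability one, $\sum_{i=1}^{N_t}w_t^i=1$ for all $t\ge0$, then the splitting method is a weighted ensemble method for a suitable choice of bins (namely, at each step, the children of parents in the same bin all receive the same weight, each bin produces a fixed number of children, and the method satisfies the definition of a weighted ensemble method given in the context).
   Context: Splitting method: Let $K$ be a Markov transition kernel on a measurable state space $X$ and $\mu_0$ a probability distribution on $X$. A splitting method produces, for $t=0,1,2,\dots$, particles $\xi_t^1,\dots,\xi_t^{N_t}\in X$ with weights $w_t^1,\dots,w_t^{N_t}\ge 0$, together with a filtration $\mathcal F_0\subseteq\hat{\mathcal F}_0\subseteq\mathcal F_1\subseteq\hat{\mathcal F}_1\subseteq\cdots$, as follows. Initially $\xi_0^1,\dots,\xi_0^{N_0}$ are i.i.d. with law $\mu_0$ and $w_0^i=1/N_0$. At each time $t\ge 0$: (Splitting step) for each $i$ a number $C_t^i>0$ is chosen, where $(\xi_t^i,w_t^i,C_t^i)_{1\le i\le N_t}$ is $\mathcal F_t$-measurable; random nonnegative integers $N_t^i$ are drawn with $\mathbb E[N_t^i\mid\mathcal F_t]=C_t^i$; each $\xi_t^i$ is replaced by $N_t^i$ copies, each with weight $w_t^i/C_t^i$; the resulting children are listed as $(\hat\xi_t^j,\hat w_t^j)_{1\le j\le N_{t+1}}$ with $N_{t+1}=\sum_i N_t^i$, and they are $\hat{\mathcal F}_t$-measurable. (Evolution step) conditional on $\hat{\mathcal F}_t$, the particles $\xi_{t+1}^1,\dots,\xi_{t+1}^{N_{t+1}}$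 are independent with $\xi_{t+1}^j\sim K(\hat\xi_t^j,\cdot)$, and $w_{t+1}^j=\hat w_t^j$. Conditionally independent resampling: given the parents $\xi_t^1,\dots,\xi_t^{N_t}$, their weights, and the numbers $C_t^k$, a matrix $P\in\mathbb R^{M\times N_t}$ with nonnegative entries and row sums at most $1$ is chosen ($M$ = maximal number of children), with $\sum_{j=1}^M P_{jk}=C_t^k$. Then, independently for $j=1,\dots,M$ (conditional on $P$ and the parent data): with probability $P_{jk}$ child $j$ is set to $\hat\xi_t^j=\xi_t^k$ with weight $\hat w_t^j=w_t^k/C_t^k$; with the remaining probability $1-\sum_k P_{jk}$ child $j$ is not assigned and $\hat w_t^j=0$. Children with zero weight are then removed. Weighted ensemble (WE) method: a splitting method in which at each time $t$ the splitting step is: the indices $1,\dots,N_t$ are partitioned ($\mathcal F_t$-measurably) into bins $u$, with $w_t(u)=\sum_{i\in u}w_t^i$; integers $N_t(u)\ge1$ are chosen ($\mathcal F_t$-measurably); for $i\in u$, $C_t^i=N_t(u)w_t^i/w_t(u)$; the $N_t^i$ satisfy $\mathbb E[N_t^i\mid\mathcal F_t]=C_t^i$ and $\sum_{i\in u}N_t^i=N_t(u)$ almost surely; and every child of a parent in bin $u$ receives weight $w_t(u)/N_t(u)$. *)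

(* Defs.v *)
From HB Require Import structures.
From mathcomp Require Export all_boot all_order all_algebra.
From mathcomp Require Export reals.
Set Implicit Arguments.
Unset Strict Implicit.
Unset Printing Implicit Defensive.
Export Order.TTheory GRing.Theory Num.Theory.
Local Open Scope ring_scope.

(* One splitting step, conditional on F_t: the parent data are fixed.
   Parents are indexed by 'I_N, potential children by 'I_M.
   w k = weight of parent k, C k = the number C_t^k,
   P = the resampling matrix (entries P j k). *)

(* Outcome of the resampling: for each potential child j, either the
   parent it copies (Some k) or "not assigned" (None). *)
Definition outcome (M N : nat) := {ffun 'I_M -> option 'I_N}.

Definition child_prob (R : ringType) (M N : nat) (P : 'M[R]_(M, N))
    (j : 'I_M) (o : option 'I_N) : R :=
  match o with
  | Some k => P j k
  | None => 1 - \sum_(k < N) P j k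
  end.

(* the children are independent (conditionally on the parent data and P):
   the law of the whole outcome is the product law *)
Definition outcome_prob (R : comRingType) (M N : nat) (P : 'M[R]_(M, N))
    (a : outcome M N) : R :=
  \prod_(j < M) child_prob P j (a j).

Definition num_children (M N : nat) (a : outcome M N) (k : 'I_N) : nat :=
  #|[set j | a j == Some k]|.

Definition child_weight (R : fieldType) (M N : nat) (w C : 'I_N -> R)
    (a : outcome M N) (j : 'I_M) : R :=
  match a j with
  | Some k => w k / C k
  | None => 0
  end.

Definition cir_step (R : realFieldType) (M N : nat) (w C : 'I_N -> R)
    (P : 'M[R]_(M, N)) : Prop :=
  [/\ (forall k, 0 < w k),
      (forall k, 0 < C k),
      (forall j k, 0 <= P j k),
      (forall j, \sum_(k < N) P j k <= 1)
    & (forall k, \sum_(j < M) P j k = C k)].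

(* total weight w_t(u) of the bin with label u, bins being the fibres of bin *)
Definition bin_weight (R : ringType) (N : nat) (w : 'I_N -> R)
    (bin : 'I_N -> 'I_N) (u : 'I_N) : R :=
  \sum_(i < N | bin i == u) w i.

(* Main.v *)
Require Import Defs.
From mathcomp Require Import ring.
Local Open Scope ring_scope.

Section Aux.
Variables (R : realType) (M N : nat) (w C : 'I_N -> R) (P : 'M[R]_(M, N)).
Hypothesis hcir : cir_step w C P.
Hypothesis hpos : forall a : outcome M N, 0 < outcome_prob P a ->
     \sum_(j < M) child_weight w C a j = 1.

Lemma cp_ge0 j o : 0 <= child_prob P j o.
Proof.
case: hcir => _ _ hP hs _; case: o => [k|] /=; first exact: hP.
by rewrite subr_ge0.
Qed.

Lemma op_pos a j : 0 < outcome_prob P a -> 0 < child_prob P j (a j).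
Proof.
move=> h; rewrite lt_def cp_ge0 andbT; apply/eqP => h0.
move: h; rewrite /outcome_prob (bigD1 j) //= h0 mul0r ltxx //.
Qed.

Definition upd (a : outcome M N) j o : outcome M N :=
  [ffun j' => if j' == j then o else a j'].

Definition a0 : outcome M N :=
  [ffun j => if [pick k | 0 < P j k] is Some k then Some k else None].

Lemma a0_pos j : 0 < child_prob P j (a0 j).
Proof.
case: hcir => _ _ hP hs _.
rewrite /a0 ffunE; case: pickP => [k hk|h] //=.
rewrite big1 ?subr0 ?ltr01 // => k _.
by apply/eqP; rewrite eq_le hP andbT leNgt h.
Qed.

Lemma upd_pos j o : 0 < child_prob P j o -> 0 < outcome_prob P (upd a0 j o).
Proof.
move=> h; apply: prodr_gt0 => j' _; rewrite /upd ffunE.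
by case: eqP => [->|_] //; apply: a0_pos.
Qed.

Lemma cw_eq j o o' : 0 < child_prob P j o -> 0 < child_prob P j o' ->
  child_weight w C (upd a0 j o) j = child_weight w C (upd a0 j o') j.
Proof.
move=> h h'.
have := hpos _ (@upd_pos j o' h'); have := hpos _ (@upd_pos j o h).
rewrite (bigD1 j) //= [in X in _ -> X -> _](bigD1 j) //=.
rewrite (eq_bigr (fun j' => child_weight w C a0 j')); last first.
  by move=> j' hj; rewrite /child_weight /upd ffunE (negbTE hj).
rewrite [in X in _ -> X -> _](eq_bigr (fun j' => child_weight w C a0 j')); last first.
  by move=> j' hj; rewrite /child_weight /upd ffunE (negbTE hj).
by move=> e1 e2; apply/(addIr (\sum_(i < M | i != j) child_weight w C a0 i)); rewrite e1 e2.
Qed.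

Definition r k := w k / C k.

Lemma r_gt0 k : 0 < r k.
Proof. by case: hcir => hw hC _ _ _; rewrite /r divr_gt0. Qed.

Lemma F1 j k k' : 0 < P j k -> 0 < P j k' -> r k = r k'.
Proof.
move=> h h'; have := @cw_eq j (Some k) (Some k') h h'.
by rewrite /child_weight /upd !ffunE eqxx.
Qed.

Lemma F2 j k : 0 < P j k -> \sum_(k' < N) P j k' = 1.
Proof.
move=> h; case: hcir => _ _ hP hs _.
apply/eqP; rewrite eq_le hs /=; rewrite leNgt; apply/negP => hlt.
have hN : 0 < child_prob P j None by rewrite /= subr_gt0.
have := @cw_eq j (Some k) None h hN.
rewrite /child_weight /upd !ffunE eqxx => e.
by have := r_gt0 k; rewrite /r e ltxx.
Qed.
End Aux.

Theorem mainTheorem3 (R : realType) (M N : nat) (w C : 'I_N -> R)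
    (P : 'M[R]_(M, N)) :
  cir_step w C P ->
  \sum_(k < N) w k = 1 ->
  (forall a : outcome M N, 0 < outcome_prob P a ->
     \sum_(j < M) child_weight w C a j = 1) ->
  exists (bin : 'I_N -> 'I_N) (Nb : 'I_N -> nat),
    [/\ (forall k, (0 < Nb (bin k))%N),
        (forall k, C k = (Nb (bin k))%:R * w k / bin_weight w bin (bin k)),
        (forall k, w k / C k = bin_weight w bin (bin k) / (Nb (bin k))%:R)
      & (forall a : outcome M N, 0 < outcome_prob P a ->
           forall k, (\sum_(i < N | bin i == bin k) num_children a i)%N
                     = Nb (bin k))].
Proof.
move=> hcir _ hpos.
have [hw hC hP hs hcol] := hcir.
pose rr := fun k => w k / C k.
pose bin k := odflt k [pick i | rr i == rr k].
have binr k : rr (bin k) = rr k.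
  by rewrite /bin; case: pickP => [i /eqP|] //=.
have binE i k : (bin i == bin k) = (rr i == rr k).
  apply/eqP/eqP => [e|e]; first by rewrite -binr e binr.
  rewrite /bin (@eq_pick _ (fun x => rr x == rr i) (fun x => rr x == rr k)); last by move=> x; rewrite e.
  by case: pickP => [//|h]; have := h i; rewrite e eqxx.
pose S u := [set j : 'I_M | [exists i, (bin i == u) && (0 < P j i)]].
pose Nb u := #|S u|.
have F1' : forall j k k', 0 < P j k -> 0 < P j k' -> rr k = rr k' := @F1 R M N w C P hcir hpos.
 have F2' := @F2 R M N w C P hcir hpos.
have cnt a : 0 < outcome_prob P a -> forall k,
    (\sum_(i < N | bin i == bin k) num_children a i)%N = Nb (bin k).
  move=> ha k.
  rewrite /num_children /Nb.
  under eq_bigr do rewrite -sum1_card.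
  rewrite -sum1_card [RHS]big_mkcond /=.
  under eq_bigr do rewrite big_mkcond /=.
  rewrite exchange_big /=; apply: eq_bigr => j _.
  have hj := @op_pos R M N w C P hcir a j ha.
  rewrite /S [in RHS]in_set; case e: (a j) hj => [i0|] /= hj.
    under eq_bigr do rewrite inE e.
    rewrite big_mkcond (bigD1 i0) //= eqxx big1 /=; last first.
      by move=> i hi; case: ifP => // _; case: eqP => // -[] ei; rewrite ei eqxx in hi.
    rewrite addn0; case: ifP => hb.
      suff -> : [exists i, (bin i == bin k) && (0 < P j i)] by [].
      by apply/existsP; exists i0; rewrite hb.
    case: ifP => // /existsP [i /andP[/eqP hi hpi]].
    by move: hb; rewrite -hi binE; have := F1' _ _ _ hpi hj; rewrite /rr => ->; rewrite eqxx.
  rewrite big1 /=; last by move=> i _; rewrite inE e.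
  case: ifP => // /existsP [i /andP[_ hpi]].
  by move: hj; rewrite (F2' _ _ hpi) subrr ltxx.
have sumC k : \sum_(i < N | bin i == bin k) C i = (Nb (bin k))%:R.
  rewrite (eq_bigr (fun i => \sum_(j < M) P j i)); last by move=> i _; rewrite hcol.
  rewrite exchange_big /= /Nb -sumr_const big_mkcond /=.
  rewrite [RHS]big_mkcond; apply: eq_bigr => j _; case: ifP.
    rewrite inE => /existsP [i0 /andP[/eqP hb0 hp0]].
    rewrite -(F2' _ _ hp0) [RHS](bigID (fun i => bin i == bin k)) /=.
    rewrite [X in _ = _ + X]big1 ?addr0 // => i hi.
    apply/eqP; rewrite eq_le hP andbT leNgt; apply/negP => hpi.
    by move: hi; rewrite binE -(F1' _ _ _ hp0 hpi) -binE hb0 eqxx.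
  rewrite inE => hn; rewrite big1 // => i hi.
  apply/eqP; rewrite eq_le hP andbT leNgt; apply/negP => hpi.
  by move/negbT/negP: hn; apply; apply/existsP; exists i; rewrite hi.
have Nbpos k : (0 < Nb (bin k))%N.
  rewrite /Nb card_gt0; apply/set0Pn.
  have [j hj] : exists j, 0 < P j k.
    case: (pickP (fun j => 0 < P j k)) => [j hj|hn]; first by exists j.
    have := hC k; rewrite -hcol big1 ?ltxx // => j _.
    by apply/eqP; rewrite eq_le hP andbT leNgt hn.
  by exists j; rewrite inE; apply/existsP; exists k; rewrite eqxx hj.
have bw k : bin_weight w bin (bin k) = rr k * (Nb (bin k))%:R.
  rewrite /bin_weight -sumC big_distrr /=; apply: eq_bigr => i /eqP hi.
  have : rr i = rr k by apply/eqP; rewrite -binE hi.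
  rewrite /rr => <-; have := hC i; rewrite lt0r => /andP[hc _]; field.
  done.
exists bin, Nb; split => //.
- move=> k; rewrite bw /rr.
  have hc : C k != 0 by rewrite gt_eqF.
  have hwk : w k != 0 by rewrite gt_eqF.
  have hn : (Nb (bin k))%:R != 0 :> R by rewrite pnatr_eq0 -lt0n.
  by field; rewrite hc hwk hn.
- move=> k; rewrite bw.
  have hn : (Nb (bin k))%:R != 0 :> R by rewrite pnatr_eq0 -lt0n.
  by rewrite mulfK.
Qed.
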